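(* If $G$ is a connected graph that is not $\omega$-evadible, then either $G$ is finite or $G$ has a vertex of infinite degree.
   Context: Cat Herding is played on a simple, possibly infinite graph $G$. The cat first places its token on a vertex. Then the players alternate, the herder moving first: the herder deletes one edge of the current graph, and then, unless the cat's current vertex has degree $0$ in the current graph, the cat moves its token along a finite path with at least one edge in the current graph to a different vertex. The cat is captured when its vertex has degree $0$ in the current graph. $G$ is $k$-evadible if the cat has a strategy (including its choice of starting vertex) that, against every herder strategy, yields a legal cat move after each of the first $k-1$ edge deletions; $G$ is $\omega$-evadible if it is $k$-evadible for every $k\in\mathbb{N}$. *)

(* Defs.v *)
From Stdlib Require Import List Relations.
Import ListNotations.

Record SimpleGraph := {
  vert :> Type;
  adj : vert -> vert -> Prop;
  adj_sym : forall x y, adj x y -> adj y x;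
  adj_irrefl : forall x, ~ adj x x
}.

(* The current graph after deleting the (unordered) edges listed in D. *)
Definition cur_adj (G : SimpleGraph) (D : list (G * G)) (x y : G) : Prop :=
  adj G x y /\ ~ In (x, y) D /\ ~ In (y, x) D.

Definition cat_move (G : SimpleGraph) (D : list (G * G)) (v w : G) : Prop :=
  w <> v /\ clos_trans G (cur_adj G D) v w.

(* survives G n D v : the cat sits at v, D has been deleted, the herder is to
   move; the cat can guarantee a legal move after each of the next n
   deletions. *)
Fixpoint survives (G : SimpleGraph) (n : nat) (D : list (G * G)) (v : G) : Prop :=
  match n with
  | O => True
  | S m => forall x y : G, cur_adj G D x y ->
             exists w, cat_move G ((x, y) :: D) v w /\ survives G m ((x, y) :: D) w
  end.

Definition k_evadible (G : SimpleGraph) (k : nat) : Prop :=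
  exists v : G, survives G (k - 1) [] v.

Definition omega_evadible (G : SimpleGraph) : Prop :=
  forall k : nat, k_evadible G k.

Definition connected (G : SimpleGraph) : Prop :=
  forall u v : G, clos_refl_trans G (adj G) u v.

Definition finite_graph (G : SimpleGraph) : Prop :=
  exists l : list G, forall v : G, In v l.

Definition infinite_degree (G : SimpleGraph) (v : G) : Prop :=
  ~ exists l : list G, forall w : G, adj G v w -> In w l.

(* Main.v *)
Require Import Defs.
From Stdlib Require Import List Relations.
From Stdlib Require Import Classical Lia Arith.
Import ListNotations.

Section S.
Variable G : SimpleGraph.

Lemma cur_adj_sym D x y : cur_adj G D x y -> cur_adj G D y x.
Proof. intros [H1 [H2 H3]]. split; [apply adj_sym; exact H1|tauto]. Qed.

Lemma path_fwd D (w : nat -> G) i : forall j, i < j ->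
  (forall q, i <= q < j -> cur_adj G D (w q) (w (S q))) ->
  clos_trans G (cur_adj G D) (w i) (w j) /\ clos_trans G (cur_adj G D) (w j) (w i).
Proof.
  induction j; intros Hij H; [lia|].
  destruct (Nat.eq_dec i j) as [->|Hne].
  - split; apply t_step; [|apply cur_adj_sym]; apply H; lia.
  - destruct IHj as [A B]; [lia| intros; apply H; lia|].
    split.
    + eapply t_trans; [exact A| apply t_step; apply H; lia].
    + eapply t_trans; [apply t_step; apply cur_adj_sym; apply H; lia| exact B].
Qed.

Lemma surv : forall n D (w : nat -> G) b,
  (forall p q, b <= p <= b + 2*2^n -> b <= q <= b + 2*2^n -> w p = w q -> p = q) ->
  (forall q, b <= q < b + 2*2^n -> cur_adj G D (w q) (w (S q))) ->
  survives G n D (w (b + 2^n)).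
Proof.
  induction n; intros D w b Hinj Hadj; [simpl; trivial|].
  simpl survives. intros x y _.
  rewrite Nat.pow_succ_r' in *.
  assert (Hh : 2^n <> 0) by (apply Nat.pow_nonzero; lia).
  set (h := 2^n) in *.
  replace (b + (h + (h + 0))) with (b + 2*h) by lia.
  destruct (classic (exists q, b <= q < b + 2*h /\
     ((w q, w (S q)) = (x,y) \/ (w (S q), w q) = (x,y)))) as [[q0 [Hq0 Hhit]]|Hno].
  - exists (w (b + 2*h + h)).
    assert (Hint : forall q, b + 2*h <= q < b + 2*h + 2*h -> cur_adj G ((x,y)::D) (w q) (w (S q))).
    { intros q Hq. destruct (Hadj q) as [A1 [A2 A3]]; [lia|].
      split; [exact A1|]. simpl. split; intros [E|E]; try tauto.
      - destruct Hhit as [E'|E']; rewrite <- E' in E; injection E as E1 E2.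
        + assert (q0 = q) by (apply Hinj; lia || congruence). lia.
        + assert (S q0 = q) by (apply Hinj; lia || congruence).
          assert (q0 = S q) by (apply Hinj; lia || congruence). lia.
      - destruct Hhit as [E'|E']; rewrite <- E' in E; injection E as E1 E2.
        + assert (q0 = S q) by (apply Hinj; lia || congruence).
          assert (S q0 = q) by (apply Hinj; lia || congruence). lia.
        + assert (S q0 = S q) by (apply Hinj; lia || congruence). lia. }
    split.
    + split.
      * intro E. assert (b + 2*h + h = b + 2*h) by (apply Hinj; lia || congruence). lia.
      * apply (path_fwd _ w (b + 2*h) (b+2*h+h)); [lia|]. intros; apply Hint; lia.
    + apply IHn.
      * intros p q Hp Hq E. apply Hinj; lia || congruence.
      * intros q Hq. apply Hint. lia.
  - exists (w (b + h)).
    assert (Hint : forall q, b <= q < b + 2*h -> cur_adj G ((x,y)::D) (w q) (w (S q))).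
    { intros q Hq. destruct (Hadj q) as [A1 [A2 A3]]; [lia|].
      split; [exact A1|]. simpl. split; intros [E|E]; try tauto;
      apply Hno; exists q; split; auto. }
    split.
    + split.
      * intro E. assert (b + h = b + 2*h) by (apply Hinj; lia || congruence). lia.
      * apply (path_fwd _ w (b + h) (b+2*h)); [lia|]. intros; apply Hint; lia.
    + apply IHn.
      * intros p q Hp Hq E. apply Hinj; lia || congruence.
      * intros q Hq. apply Hint. lia.
Qed.

Definition walk (f : nat -> G) L := forall j, j < L -> adj G (f j) (f (S j)).

Lemma conn_walk (x z : G) : clos_refl_trans G (adj G) x z ->
  exists L f, f 0 = x /\ f L = z /\ walk f L.
Proof.
  intro H. apply clos_rt_rt1n_iff in H. induction H.
  - exists 0, (fun _ => x). repeat split; intros j Hj; lia.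
  - destruct IHclos_refl_trans_1n as [L [f [A [B C]]]].
    exists (S L), (fun j => match j with 0 => x | S j' => f j' end).
    repeat split; auto. intros [|j] Hj; simpl.
    + rewrite A; auto.
    + apply C; lia.
Qed.

Lemma min_walk (r u : G) (P : nat -> Prop) : forall L, P L ->
  exists L0, P L0 /\ forall L', P L' -> L0 <= L'.
Proof.
  induction L as [L IH] using lt_wf_ind. intro HL.
  destruct (classic (exists L', L' < L /\ P L')) as [[L' [A B]]|N].
  - apply (IH L' A B).
  - exists L. split; auto. intros L' HL'. destruct (le_lt_dec L L'); auto.
    exfalso; apply N; eauto.
Qed.

Lemma min_inj (r u : G) L f : f 0 = r -> f L = u -> walk f L ->
  (forall L' f', f' 0 = r -> f' L' = u -> walk f' L' -> L <= L') ->
  forall p q, p <= L -> q <= L -> f p = f q -> p = q.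
Proof.
  intros H0 HL Hw Hmin.
  assert (K : forall p q, p < q -> q <= L -> f p = f q -> False).
  { intros p q Hpq HqL E.
    set (g := fun j => if le_lt_dec j p then f j else f (j + (q - p))).
    assert (L <= L - (q - p)); [|lia].
    apply (Hmin _ g).
    - unfold g; destruct (le_lt_dec 0 p); [auto|lia].
    - unfold g; destruct (le_lt_dec (L - (q-p)) p).
      + replace (L - (q-p)) with p by lia. rewrite E. replace q with L by lia. auto.
      + replace (L - (q - p) + (q - p)) with L by lia. auto.
    - intros j Hj. unfold g.
      destruct (le_lt_dec j p); destruct (le_lt_dec (S j) p); try lia.
      + apply Hw; lia.
      + assert (j = p) by lia. subst j. rewrite E.
        replace (S p + (q - p)) with (S q) by lia. apply Hw; lia.
      + replace (S j + (q - p)) with (S (j + (q-p))) by lia. apply Hw; lia. }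
  intros p q Hp Hq E. destruct (lt_eq_lt_dec p q) as [[A|A]|A]; auto.
  - exfalso; eauto.
  - exfalso; eauto.
Qed.

Hypothesis locfin : forall v : G, exists l : list G, forall w, adj G v w -> In w l.

Lemma nbhd_list : forall l : list G, exists l', forall x, In x l -> forall y, adj G x y -> In y l'.
Proof.
  induction l as [|a l IH].
  - exists []. intros x [].
  - destruct IH as [l' H]. destruct (locfin a) as [la Ha].
    exists (la ++ l'). intros x [<-|Hx] y Hy; apply in_or_app; eauto.
Qed.

Lemma ball (r : G) : forall d, exists l, forall f L, L <= d -> walk f L -> f 0 = r -> In (f L) l.
Proof.
  induction d.
  - exists [r]. intros f L HL _ H0. replace L with 0 by lia. rewrite H0; simpl; auto.
  - destruct IHd as [l H]. destruct (nbhd_list l) as [l' H'].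
    exists (l ++ l'). intros f L HL Hw H0. apply in_or_app.
    destruct (le_lt_dec L d).
    + left; eauto.
    + right. replace L with (S d) by lia. apply (H' (f d)).
      * apply H; auto. intros j Hj; apply Hw; lia.
      * apply Hw; lia.
Qed.

End S.

Theorem mainTheorem20 (G : SimpleGraph) :
  connected G -> ~ omega_evadible G ->
  finite_graph G \/ exists v : G, infinite_degree G v.
Proof.
  intros Hc Hne.
  destruct (classic (finite_graph G)) as [F|NF]; [left; exact F|right].
  apply NNPP; intro NI. apply Hne. intro k.
  assert (locfin : forall v : G, exists l : list G, forall w, adj G v w -> In w l).
  { intro v. apply NNPP. intro N. apply NI. exists v. exact N. }
  assert (Hr : exists r : G, True).
  { apply NNPP; intro N. apply NF. exists []. intro v. exfalso. apply N; exists v; trivial. }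
  destruct Hr as [r _].
  set (n := k - 1).
  destruct (ball G locfin r (2 * 2^n)) as [l Hl].
  assert (Hu : exists u, ~ In u l).
  { apply NNPP; intro N. apply NF. exists l. intro v. apply NNPP; intro N2. apply N; eauto. }
  destruct Hu as [u Hu].
  destruct (conn_walk G r u (Hc r u)) as [L1 [f1 [A1 [B1 C1]]]].
  destruct (min_walk G r u (fun L => exists f, f 0 = r /\ f L = u /\ walk G f L) L1)
    as [L [[f [A [B C]]] M]]; [eauto|].
  assert (Hinj := min_inj G r u L f A B C (fun L' f' X Y Z => M L' (ex_intro _ f' (conj X (conj Y Z))))).
  assert (HL : 2 * 2^n < L).
  { destruct (le_lt_dec L (2*2^n)); auto. exfalso. apply Hu. rewrite <- B. apply Hl; auto. }
  exists (f (0 + 2^n)). apply surv.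
  - intros p q Hp Hq E. apply Hinj; auto; lia.
  - intros q Hq. split; [apply C; lia|]. simpl; tauto.
Qed.
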